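(* Let $G$ be a connected graph with at least $3$ vertices and $\lambda_3(G)=k$, and let $x,y$ be two adjacent vertices of $G$. Then $d_G(x)\ge k+1$ or $d_G(y)\ge k+1$.
   Context: For a graph $G$ and $S\subseteq V(G)$ with $|S|\ge 2$, an $S$-tree is a subgraph of $G$ that is a tree containing all vertices of $S$; $\lambda(S)$ is the maximum number of pairwise edge-disjoint $S$-trees, and $\lambda_3(G)=\min\{\lambda(S): |S|=3\}$. $d_G(v)$ is the degree of $v$ in $G$. *)

(* Defs.v *)
From mathcomp Require Import all_boot.
Set Implicit Arguments. Unset Strict Implicit. Unset Printing Implicit Defensive.

Definition simple_graph (T : finType) (e : rel T) : Prop :=
  symmetric e /\ irreflexive e.

Definition deg (T : finType) (e : rel T) (v : T) : nat := #|[set w | e v w]|.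

(* A subgraph H = (V(H), E(H)); edges are 2-element vertex sets. *)
Definition subgraph_t (T : finType) : Type := ({set T} * {set {set T}})%type.

Definition is_subgraph (T : finType) (e : rel T) (H : subgraph_t T) : Prop :=
  forall f, f \in H.2 -> exists u v, [/\ e u v, f = [set u; v], u \in H.1 & v \in H.1].

Definition sadj (T : finType) (H : subgraph_t T) : rel T :=
  fun u v => (u != v) && ([set u; v] \in H.2).

Definition sconnected (T : finType) (H : subgraph_t T) : Prop :=
  forall u v, u \in H.1 -> v \in H.1 -> connect (sadj H) u v.

Definition sacyclic (T : finType) (H : subgraph_t T) : Prop :=
  forall c : seq T, 3 <= size c -> uniq c -> ~~ cycle (sadj H) c.

Definition is_tree (T : finType) (e : rel T) (H : subgraph_t T) : Prop :=
  [/\ is_subgraph e H, sconnected H & sacyclic H].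

Definition S_tree (T : finType) (e : rel T) (S : {set T}) (H : subgraph_t T) : Prop :=
  is_tree e H /\ S \subset H.1.

Definition has_S_packing (T : finType) (e : rel T) (S : {set T}) (m : nat) : Prop :=
  exists F : 'I_m -> subgraph_t T,
    (forall i, S_tree e S (F i)) /\
    (forall i j, i != j -> [disjoint (F i).2 & (F j).2]).

Definition lambda_is (T : finType) (e : rel T) (S : {set T}) (m : nat) : Prop :=
  has_S_packing e S m /\ (forall m', has_S_packing e S m' -> m' <= m).

Definition lambda3_is (T : finType) (e : rel T) (k : nat) : Prop :=
  (exists S : {set T}, #|S| = 3 /\ lambda_is e S k) /\
  (forall (S : {set T}) m, #|S| = 3 -> lambda_is e S m -> k <= m).

Definition graph_connected (T : finType) (e : rel T) : Prop :=
  forall u v : T, connect e u v.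

(* Main.v *)
Require Import Defs.
From mathcomp Require Import all_boot.
From Stdlib Require Import Classical.
From mathcomp Require Import zify.

Set Implicit Arguments. Unset Strict Implicit. Unset Printing Implicit Defensive.

Lemma sum_disj (I U : finType) (A : I -> {set U}) (E : {set U}) :
  (forall i j, i != j -> [disjoint A i & A j]) -> (forall i, A i \subset E) ->
  \sum_i #|A i| <= #|E|.
Proof.
move=> dA sAE.
suff H : forall r : seq I, uniq r -> exists B : {set U},
  [/\ B \subset E, \sum_(i <- r) #|A i| = #|B| & forall j, j \notin r -> [disjoint A j & B]].
  have [B [sB -> _]] := H (index_enum I) (index_enum_uniq I).
  by rewrite subset_leq_card.
elim=> [|a r IH] /=.
  exists set0; split; first exact: sub0set.
    by rewrite big_nil cards0.
  by move=> j _; rewrite -setI_eq0 setI0.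
move=> /andP[nar ur]; have [B [sB eB dB]] := IH ur.
exists (A a :|: B); split.
- by rewrite subUset sAE sB.
- rewrite big_cons eB cardsU.
  have : [disjoint A a & B] by apply: dB.
  rewrite -setI_eq0 => /eqP ->; rewrite cards0; lia.
- move=> j; rewrite inE negb_or => /andP[nja njr].
  rewrite -setI_eq0 setIUr setU_eq0 !setI_eq0 dB // andbT; exact: dA.
Qed.

Lemma max_exists (P : nat -> Prop) B : P 0 -> (forall m, P m -> m <= B) ->
  exists m, P m /\ forall m', P m' -> m' <= m.
Proof.
elim: B => [|B IH] P0 bP.
  by exists 0; split => // m /bP; rewrite leqn0 => /eqP ->.
case: (classic (P B.+1)) => HB.
  by exists B.+1; split.
apply: IH => // m Pm; have := bP m Pm; rewrite leq_eqVlt => /orP[/eqP E|] //.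
by rewrite E in Pm.
Qed.

Lemma edge_at (T : finType) (H : subgraph_t T) x y :
  sconnected H -> x \in H.1 -> y \in H.1 -> x != y ->
  exists f, f \in H.2 /\ x \in f.
Proof.
move=> cH hx hy nxy; have /connectP [p pp ly] := cH x y hx hy.
case: p pp ly => [|v p] /=; first by move=> _ E; rewrite E eqxx in nxy.
move=> /andP[/andP[_ hv] _] _; exists [set x; v]; split => //.
by rewrite !inE eqxx.
Qed.

Lemma stuck (T : finType) (H : subgraph_t T) x y z :
  (forall f, f \in H.2 -> x \in f -> f = [set x; y]) ->
  (forall f, f \in H.2 -> y \in f -> f = [set x; y]) ->
  connect (sadj H) x z -> z \in [set x; y].
Proof.
move=> hx hy /connectP [p pp ->].
suff S : forall u, u \in [set x; y] -> path (sadj H) u p -> last u p \in [set x; y].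
  by apply: S => //; rewrite !inE eqxx.
elim: p {pp} => [|v p IH] u /=; first by move=> h _.
move=> hu /andP[/andP[_ huv] pp].
have hv : v \in [set x; y].
  move: hu; rewrite !inE => /orP[] /eqP Eu; subst u; rewrite -!in_set2.
  - by rewrite -(hx _ huv (set21 _ _)) set22.
  - by rewrite -(hy _ huv (set21 _ _)) set22.
exact: IH.
Qed.

Lemma deg_bound (T : finType) (e : rel T) (v w : T) m (F : 'I_m -> subgraph_t T) :
  simple_graph e -> e v w -> (forall i, is_subgraph e (F i)) ->
  (forall i j, i != j -> [disjoint (F i).2 & (F j).2]) ->
  (forall i, exists f, f \in (F i).2 /\ v \in f) ->
  ((exists i, [set v; w] \in (F i).2 /\ 1 < #|[set f in (F i).2 | v \in f]|)
    \/ (forall i, [set v; w] \notin (F i).2)) -> m < deg e v.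
Proof.
move=> [sym irr] evw subF dF exF hc.
pose A i := [set f in (F i).2 | v \in f].
pose E := [set [set v; u] | u in [set u | e v u]].
have hE : #|E| <= deg e v by apply: leq_imset_card.
have sAE : forall i, A i \subset E.
  move=> i; apply/subsetP => f; rewrite inE => /andP[fi vf].
  have [a [b [eab fab _ _]]] := subF i f fi.
  rewrite fab; move: vf; rewrite fab in_set2 => /orP[] /eqP Ev.
  - rewrite -Ev; apply/imsetP; exists b => //; by rewrite inE Ev.
  - rewrite -Ev setUC; apply/imsetP; exists a => //; by rewrite inE Ev sym.
have dA : forall i j, i != j -> [disjoint A i & A j].
  move=> i j nij; rewrite -setI_eq0; apply/eqP/setP => f; rewrite !inE.
  have := dF i j nij; rewrite -setI_eq0 => /eqP /setP /(_ f); rewrite !inE.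
  by case: (f \in (F i).2); case: (f \in (F j).2); case: (v \in f).
have A1 : forall i, 0 < #|A i|.
  move=> i; have [f [fi vf]] := exF i; apply/card_gt0P; exists f.
  by rewrite inE fi vf.
have vwE : [set v; w] \in E by apply/imsetP; exists w; rewrite ?inE.
case: hc => [[i0 [h0 h1]]|hn].
- have := sum_disj dA sAE.
  have : \sum_i (1 + (i == i0)) <= \sum_i #|A i|.
    apply: leq_sum => i _; case: eqP => [->|_] //; rewrite addn0; exact: A1.
  rewrite big_split /= sum1_card card_ord (bigD1 i0) //= eqxx big1 //=.
    by move=> a b; rewrite addn0 addn1 in a; exact: leq_trans (leq_trans a b) hE.
  by move=> i /negbTE ->.
- have sAE' : forall i, A i \subset E :\ [set v; w].
    move=> i; apply/subsetP => f fA; rewrite !inE (subsetP (sAE i)) // andbT.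
    apply/eqP => Ef; move: fA; rewrite Ef inE => /andP[h _].
    by move: (hn i); rewrite h.
  have := sum_disj dA sAE'.
  have : \sum_(i : 'I_m) 1 <= \sum_i #|A i| by apply: leq_sum => i _; exact: A1.
  rewrite sum1_card card_ord.
  have := cardsD1 [set v; w] E; rewrite vwE /= => c a b.
  have h := leq_trans a b; rewrite c add1n in hE; exact: leq_ltn_trans h hE.
Qed.

Lemma card_le1_eq (U : finType) (A : {set U}) a b :
  #|A| <= 1 -> a \in A -> b \in A -> a = b.
Proof.
move=> h ha hb; apply/eqP; apply/negPn/negP => nab.
have : #|[set a; b]| <= #|A|.
  by apply: subset_leq_card; apply/subsetP => u; rewrite in_set2 => /orP[] /eqP ->.
by rewrite cards2 nab; move=> h2; have := leq_trans h2 h.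
Qed.

Theorem mainTheorem5 (T : finType) (e : rel T) (k : nat) (x y : T) :
  simple_graph e -> graph_connected e -> 3 <= #|T| ->
  lambda3_is e k -> e x y ->
  k.+1 <= deg e x \/ k.+1 <= deg e y.
Proof.
move=> sg _ h3 [_ hk] exy.
have [sym irr] := sg.
have nxy : x != y by apply/eqP => E; rewrite E irr in exy.
have [z hz] : exists z, z \in ~: [set x; y].
  apply/set0Pn; rewrite -card_gt0.
  have := cardsC [set x; y]; have := cards2 x y; rewrite nxy => c2.
  rewrite c2; lia.
move: hz; rewrite !inE negb_or => /andP[nzx nzy].
pose S := x |: [set y; z].
have cS : #|S| = 3.
  rewrite /S cardsU1 cards2 !inE negb_or nxy.
  by rewrite [x == z]eq_sym [y == z]eq_sym nzx nzy.
have xS : x \in S by rewrite !inE eqxx.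
have yS : y \in S by rewrite !inE eqxx orbT.
have zS : z \in S by rewrite !inE eqxx !orbT.
have bound : forall m, has_S_packing e S m -> m <= #|{set T}|.
  move=> m [F [hF dF]].
  have := @sum_disj _ _ (fun i => (F i).2) setT dF (fun i => subsetT _).
  rewrite cardsT; apply: leq_trans.
  rewrite -[m in m <= _]card_ord -sum1_card; apply: leq_sum => i _.
  have [[_ cH _] sS] := hF i.
  have [f [fi _]] := edge_at cH (subsetP sS x xS) (subsetP sS y yS) nxy.
  by apply/card_gt0P; exists f.
have p0 : has_S_packing e S 0.
  by exists (fun _ => (set0, set0)); split; case.
have [M [pM maxM]] := max_exists p0 bound.
have kM : k <= M by apply: (hk S M cS); split.
have [F [hF dF]] := pM.
have subF : forall i, is_subgraph e (F i) by move=> i; have [[]] := hF i.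
have exF : forall v, v \in S -> forall i, exists f, f \in (F i).2 /\ v \in f.
  move=> v vS i; have [[_ cH _] sS] := hF i.
  have [w [wS nvw]] : exists w, w \in S /\ v != w.
    case: (v =P x) => [->|/eqP nvx]; first by exists y.
    by exists x; split => //.
  exact: edge_at cH (subsetP sS v vS) (subsetP sS w wS) nvw.
have Eyx : [set y; x] = [set x; y] by rewrite setUC.
case: (boolP [exists i, [set x; y] \in (F i).2]) => [/existsP [i0 h0]|hn].
- case: (boolP (1 < #|[set f in (F i0).2 | x \in f]|)) => hx.
    left; apply: leq_trans (deg_bound sg exy subF dF (exF x xS) _) => //.
    by left; exists i0.
  case: (boolP (1 < #|[set f in (F i0).2 | y \in f]|)) => hy.
    have eyx : e y x by rewrite sym.
    right; apply: leq_trans (deg_bound sg eyx subF dF (exF y yS) _) => //.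
    by left; exists i0; rewrite Eyx.
  exfalso.
  have [[_ cH _] sS] := hF i0.
  have hx' : forall f, f \in (F i0).2 -> x \in f -> f = [set x; y].
    move=> f fi xf; apply: (card_le1_eq (A := [set f in (F i0).2 | x \in f])).
    - by rewrite leqNgt.
    - by rewrite inE fi xf.
    - by rewrite inE h0 set21.
  have hy' : forall f, f \in (F i0).2 -> y \in f -> f = [set x; y].
    move=> f fi yf; apply: (card_le1_eq (A := [set f in (F i0).2 | y \in f])).
    - by rewrite leqNgt.
    - by rewrite inE fi yf.
    - by rewrite inE h0 set22.
  have := stuck hx' hy' (cH x z (subsetP sS x xS) (subsetP sS z zS)).
  by rewrite in_set2 (negbTE nzx) (negbTE nzy).
- left; apply: leq_trans (deg_bound sg exy subF dF (exF x xS) _) => //.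
  right => i; apply/negP => hi; move/existsP: hn; apply; by exists i.
Qed.
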